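(* Let $n\geq 2$ and $r\geq 1$, and let $\rho$ be a partition of $[n]\times[r]$ such that $\rho\vee\pi=\widehat{1}$, where $\pi=\{\pi_1,\dots,\pi_n\}$ with $\pi_k=\{(k,1),\dots,(k,r)\}$. Then there exists $i\in\{1,\dots,n\}$ such that the set partition $\rho^{(i)}:=\{b\setminus\pi_i : b\in\rho,\ b\not\subset\pi_i\}$ of $(\{1,\dots,n\}\setminus\{i\})\times[r]$ is connected, i.e. $\rho^{(i)}\vee\{\pi_j : j\neq i\}$ is the one-block partition of $(\{1,\dots,n\}\setminus\{i\})\times[r]$.
   Context: $[n]=\{1,\dots,n\}$. For a finite set, $\rho\vee\sigma$ denotes the finest partition coarser than both $\rho$ and $\sigma$, and $\widehat{1}$ denotes the one-block partition. A partition $\rho$ of $\eta\times[r]$ ($\eta\subset[n]$) is called connected if $\rho\vee\{\pi_k:k\in\eta\}$ is the one-block partition of $\eta\times[r]$. *)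

(* Defs.v *)
From mathcomp Require Import all_boot.
Set Implicit Arguments. Unset Strict Implicit. Unset Printing Implicit Defensive.

Definition coarser (T : finType) (P Q : {set {set T}}) : Prop :=
  forall B, B \in P -> exists2 C, C \in Q & B \subset C.

Definition is_join (T : finType) (A : {set T}) (P Q J : {set {set T}}) : Prop :=
  [/\ partition J A, coarser P J, coarser Q J &
      forall K : {set {set T}}, partition K A -> coarser P K -> coarser Q K ->
        coarser J K].

(* pi_k = {(k,1),...,(k,r)} inside [n] x [r] (0-indexed: 'I_n * 'I_r). *)
Definition pik (n r : nat) (k : 'I_n) : {set 'I_n * 'I_r} :=
  [set x | x.1 == k].

Definition piset (n r : nat) (eta : {set 'I_n}) : {set {set 'I_n * 'I_r}} :=
  [set pik r k | k in eta].

Definition rows (n r : nat) (eta : {set 'I_n}) : {set 'I_n * 'I_r} :=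
  [set x | x.1 \in eta].

Definition rho_del (n r : nat) (rho : {set {set 'I_n * 'I_r}}) (i : 'I_n)
  : {set {set 'I_n * 'I_r}} :=
  [set b :\: pik r i | b in [set b in rho | ~~ (b \subset pik r i)]].

Definition connected_part (n r : nat) (eta : {set 'I_n})
  (rho : {set {set 'I_n * 'I_r}}) : Prop :=
  is_join (rows r eta) rho (piset r eta) [set rows r eta].

(* Main.v *)
Require Import Defs.
From mathcomp Require Import all_boot.
Set Implicit Arguments. Unset Strict Implicit. Unset Printing Implicit Defensive.
Set Warnings "-notation-overridden".

Definition cross n r (rho : {set {set 'I_n * 'I_r}}) (A B : {set 'I_n}) : bool :=
  [exists b in rho, [exists x in b, [exists y in b, (x.1 \in A) && (y.1 \in B)]]].

Lemma crossP n r (rho : {set {set 'I_n * 'I_r}}) (A B : {set 'I_n}) :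
  reflect (exists b, exists x, exists y, [/\ b \in rho, x \in b, y \in b, x.1 \in A & y.1 \in B])
    (cross rho A B).
Proof.
apply: (iffP idP).
- case/existsP=> b /andP[bin /existsP[x /andP[xb /existsP[y /andP[yb /andP[xa yb']]]]]].
  by exists b, x, y.
- case=> b [x [y [bin xb yb xa yb']]]. apply/existsP; exists b; rewrite bin /=.
  apply/existsP; exists x; rewrite xb /=. apply/existsP; exists y; by rewrite yb xa yb'.
Qed.

Lemma cross_sym n r (rho : {set {set 'I_n * 'I_r}}) (A B : {set 'I_n}) : cross rho A B = cross rho B A.
Proof.
by apply/crossP/crossP => -[b [x [y [? ? ? ? ?]]]]; exists b, y, x.
Qed.

Lemma same_block (T : finType) (K : {set {set T}}) D C1 C2 x :
  partition K D -> C1 \in K -> C2 \in K -> x \in C1 -> x \in C2 -> C1 = C2.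
Proof.
case/and3P=> _ tK _ h1 h2 x1 x2.
by rewrite -(def_pblock tK h1 x1) -(def_pblock tK h2 x2).
Qed.

Lemma global_conn n r (hr : 1 <= r) (rho : {set {set 'I_n * 'I_r}}) :
  partition rho [set: 'I_n * 'I_r] ->
  is_join [set: 'I_n * 'I_r] rho (piset r [set: 'I_n]) [set [set: 'I_n * 'I_r]] ->
  forall S : {set 'I_n}, S != set0 -> ~: S != set0 -> cross rho S (~: S).
Proof.
move=> Prho [_ _ _ Hmin] S /set0Pn[s sS] /set0Pn[t tS].
apply: contraT => /negP Hnc.
pose c0 : 'I_r := Ordinal hr.
pose f := fun x : 'I_n * 'I_r => x.1 \in S.
pose K := preim_partition f [set: 'I_n * 'I_r].
have PK : partition K [set: 'I_n * 'I_r] := preim_partitionP f _.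
have Heq : forall x y, (y \in pblock K x) = (f x == f y).
  move=> x y; rewrite (@pblock_equivalence_partition _ (fun x y => f x == f y)) //.
  by split=> // /eqP->.
have inK : forall x, pblock K x \in K.
  move=> x; apply: pblock_mem; case/and3P: PK => /eqP -> _ _; exact: in_setT.
have H1 : coarser rho K.
  move=> b bin; case/and3P: Prho => _ _ n0.
  have /set0Pn[x xb] : b != set0 by apply: contraNneq n0 => <-.
  exists (pblock K x) => //; apply/subsetP => y yb; rewrite Heq.
  apply/negPn/negP => hne; apply: Hnc; rewrite /f in hne.
  apply/crossP; case hx: (x.1 \in S) in hne; case hy: (y.1 \in S) in hne => //.
    by exists b, x, y; split => //; rewrite inE hy.
  by exists b, y, x; split => //; rewrite inE hx.
have H2 : coarser (piset r [set: 'I_n]) K.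
  move=> B /imsetP[k _ ->]; exists (pblock K (k, c0)) => //.
  apply/subsetP => y; rewrite /pik inE Heq /f => /eqP ->; by [].
have [C CK sC] := Hmin K PK H1 H2 _ (set11 _).
have [_ tK _] := and3P PK.
have e1 := def_pblock tK CK (subsetP sC (s, c0) (in_setT _)).
have := subsetP sC (t, c0) (in_setT _); rewrite -e1 Heq /f /= sS.
by rewrite inE in tS; rewrite (negbTE tS).
Qed.

Definition cutb n r (rho : {set {set 'I_n * 'I_r}}) (i : 'I_n) (S : {set 'I_n}) : bool :=
  [&& S != set0, S \subset [set~ i], ([set~ i] :\: S) != set0 &
      ~~ cross rho S ([set~ i] :\: S)].

Lemma noncut n r (rho : {set {set 'I_n * 'I_r}}) (i0 : 'I_n) :
  (forall S : {set 'I_n}, S != set0 -> ~: S != set0 -> cross rho S (~: S)) ->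
  exists i, forall S, ~~ cutb rho i S.
Proof.
move=> G; case: (boolP [exists i, [forall S, ~~ cutb rho i S]]) => [/existsP[i /forallP h]|H];
  first by exists i.
exfalso.
have Hc : forall i, exists S, cutb rho i S.
  move=> i; move: H; rewrite negb_exists => /forallP /(_ i).
  by rewrite negb_forall => /existsP[S /negPn]; exists S.
suff : forall m i (S : {set 'I_n}), #|S| < m -> ~~ cutb rho i S.
  by have [S cS] := Hc i0 => /(_ #|S|.+1 i0 S (ltnSn _)); rewrite cS.
elim=> [//|m IH] i S hS; apply/negP => cS.
case/and4P: (cS) => /set0Pn[j jS] sSi /set0Pn[k kS] ncS.
have ji : j != i by have := subsetP sSi j jS; rewrite !inE.
have [T cT] := Hc j.
case/and4P: cT => T0 sTj Tc0 ncT.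
pose A := if i \in T then [set~ j] :\: T else T.
have iA : i \notin A by rewrite /A; case: ifP => h; rewrite ?h // !inE h.
have A0 : A != set0.
  by rewrite /A; case: ifP => h //; apply/set0Pn; exists i; rewrite !inE h eq_sym ji.
have sAj : A \subset [set~ j].
  by rewrite /A; case: ifP => h //; apply: subsetDl.
have ncA : ~~ cross rho A ([set~ j] :\: A).
  rewrite /A; case: ifP => h //.
  have -> : [set~ j] :\: ([set~ j] :\: T) = T.
    apply/setP => x; rewrite !inE; case: (boolP (x \in T)) => xT /=; last by case: (x != j).
    have := subsetP sTj x xT; rewrite !inE.
    by move=> ->.
  by rewrite cross_sym.
case: (boolP (A :&: S == set0)) => hAS.
- have /set0Pn[a aA] := A0.
  have : cross rho A (~: A) by apply: G => //; apply/set0Pn; exists j;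
    rewrite inE; apply/negP => /(subsetP sAj); rewrite !inE eqxx.
  case/crossP => b [x [y [bin xb yb xA yA]]].
  rewrite inE in yA.
  case: (eqVneq y.1 j) => yj.
  + move/negP: ncS; apply; apply/crossP; exists b, y, x; split => //; first by rewrite yj.
    rewrite !inE; apply/andP; split.
      by apply/negP => xS; move/eqP: hAS; apply/setP => /(_ x.1); rewrite !inE xA xS.
    by apply: contraNneq iA => <-.
  + move/negP: ncA; apply; apply/crossP; exists b, x, y; split => //.
    by rewrite !inE yA yj.
- have : ~~ cutb rho j (A :&: S).
    apply: IH.
    have hc : #|A :&: S| < #|S|.
      apply: proper_card; apply/properP; split; first exact: subsetIr.
      by exists j => //; rewrite !inE; apply/negP => /andP[/(subsetP sAj)]; rewrite !inE eqxx.
    by apply: leq_trans hc _; rewrite -ltnS.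
  move/negP; apply; apply/and4P; split => //.
  + by apply: subset_trans sAj; apply: subsetIl.
  + apply/set0Pn; exists i; rewrite !inE (negbTE iA) /=. by rewrite eq_sym.
  + apply/negP => /crossP [b [x [y [bin xb yb]]]].
    rewrite !inE => /andP[xA xS] /andP[yAS yj].
    case: (boolP (y.1 \in A)) => yA.
    * rewrite yA /= in yAS.
      move/negP: ncS; apply; apply/crossP; exists b, x, y; split => //.
      rewrite !inE yAS andTb; by apply: contraNneq iA => <-.
    * move/negP: ncA; apply; apply/crossP; exists b, x, y; split => //.
      by rewrite !inE yA yj.
Qed.

Lemma del_partition n r (rho : {set {set 'I_n * 'I_r}}) (i : 'I_n) :
  partition rho [set: 'I_n * 'I_r] ->
  partition (rho_del rho i) (rows r [set~ i]).
Proof.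
move=> Prho; have [/eqP cov tr n0] := and3P Prho.
apply/and3P; split.
- apply/eqP/setP => x; apply/bigcupP/idP.
    case=> B /imsetP[b /setIdP[bin nsub] ->]; rewrite !inE => /andP[xi _].
    by rewrite xi.
  rewrite !inE => xi.
  have xc : x \in cover rho by rewrite cov.
  exists (pblock rho x :\: pik r i); last by rewrite !inE (negbTE xi) mem_pblock xc.
  apply/imsetP; exists (pblock rho x) => //; rewrite inE pblock_mem //=.
  apply/negP => /subsetP /(_ x); rewrite mem_pblock xc inE (negbTE xi).
  by move=> /(_ isT).
- apply/trivIsetP => B1 B2 /imsetP[b1 /setIdP[b1in _] ->] /imsetP[b2 /setIdP[b2in _] ->] ne.
  have ne' : b1 != b2 by apply: contraNneq ne => ->.
  have := (trivIsetP tr) b1 b2 b1in b2in ne' => d.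
  apply: disjointWl (subsetDl _ _) _; apply: disjointWr (subsetDl _ _) _; exact: d.
- apply/imsetP => -[b /setIdP[bin nsub] /eqP]; rewrite eq_sym setD_eq0.
  by rewrite (negbTE nsub).
Qed.

Lemma conn_del n r (hn : 2 <= n) (hr : 1 <= r) (rho : {set {set 'I_n * 'I_r}}) (i : 'I_n) :
  partition rho [set: 'I_n * 'I_r] ->
  (forall S, ~~ cutb rho i S) ->
  connected_part [set~ i] (rho_del rho i).
Proof.
move=> Prho nc.
have Pd := del_partition i Prho.
have [/eqP covd trd n0d] := and3P Pd.
pose c0 : 'I_r := Ordinal hr.
have /set0Pn[j jn] : [set~ i] != set0.
  by rewrite -card_gt0 cardsC1 card_ord -subn1 subn_gt0.
have jR : (j, c0) \in rows r [set~ i] by rewrite inE.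
rewrite /connected_part /is_join; split.
- apply/and3P; split; [by rewrite cover1 | exact: trivIset1 |].
  rewrite inE eq_sym; apply/set0Pn; by exists (j, c0).
- move=> B BD; exists (rows r [set~ i]); first by rewrite inE.
  by rewrite -covd; apply: bigcup_sup.
- move=> B /imsetP[k kn ->]; exists (rows r [set~ i]); first by rewrite inE.
  apply/subsetP => x; rewrite !inE => /eqP e; rewrite e; by rewrite !inE in kn.
move=> K PK H1 H2 B; rewrite inE => /eqP -> {B}.
have [/eqP covK trK n0K] := and3P PK.
pose C := pblock K (j, c0).
have CK : C \in K by apply: pblock_mem; rewrite covK.
have x0C : (j, c0) \in C by rewrite mem_pblock covK.
have pikC : forall k x, k != i -> x \in C -> x.1 = k -> pik r k \subset C.
  move=> k x ki xC xk.
  have kin : k \in [set~ i] by rewrite !inE.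
  have [C' C'K sC'] := H2 (pik r k) (imset_f _ kin).
  have -> : C = C'.
    by apply: (same_block PK CK C'K xC); apply: (subsetP sC'); rewrite inE xk.
  exact: sC'.
exists C => //.
pose S := [set k | (k != i) && (pik r k \subset C)].
have allS : forall k, k != i -> k \in S.
  move=> k ki; apply/negPn/negP => kS.
  move: (nc S); rewrite /cutb; apply/negP/negPn; apply/and4P; split.
  - apply/set0Pn; exists j; rewrite !inE in jn; rewrite inE jn /=.
    exact: (pikC j (j, c0)).
  - by apply/subsetP => x; rewrite !inE => /andP[].
  - apply/set0Pn; exists k; rewrite !inE ki andbT; by move: kS; rewrite /S inE ki.
  - apply/negP => /crossP[b [x [y [bin xb yb]]]].
    rewrite !inE => /andP[xi xsub] /andP[yS yi].
    have bn : ~~ (b \subset pik r i).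
      by apply/negP => /subsetP /(_ x xb); rewrite inE (negbTE xi).
    have bD : b :\: pik r i \in rho_del rho i by apply: imset_f; rewrite inE bin.
    have [C1 C1K sC1] := H1 _ bD.
    have xC : x \in C by apply: (subsetP xsub); rewrite inE.
    have xC1 : x \in C1 by apply: (subsetP sC1); rewrite !inE (negbTE xi) xb.
    have e1 := same_block PK CK C1K xC xC1.
    have yC : y \in C by rewrite e1; apply: (subsetP sC1); rewrite !inE yi yb.
    by move/negP: yS; apply; rewrite yi /=; exact: (pikC y.1 y).
apply/subsetP => x; rewrite !inE => xi.
have := allS _ xi; rewrite /S inE => /andP[_ /subsetP]; apply; by rewrite inE.
Qed.

Theorem lemma2p6 (n r : nat) (hn : 2 <= n) (hr : 1 <= r)
  (rho : {set {set 'I_n * 'I_r}}) :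
  partition rho [set: 'I_n * 'I_r] ->
  is_join [set: 'I_n * 'I_r] rho (piset r [set: 'I_n]) [set [set: 'I_n * 'I_r]] ->
  exists i : 'I_n,
    partition (rho_del rho i) (rows r [set~ i]) /\
    connected_part [set~ i] (rho_del rho i).
Proof.
move=> Prho J.
have G := global_conn hr Prho J.
have [i hi] := noncut (Ordinal (ltnW hn)) G.
exists i; split; first exact: del_partition.
exact: conn_del.
Qed.
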